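(* Let $U_1,\dots,U_{d-1}$ be iid uniform on $[0,1]$ and $q\ge1$. Then for every interval $[a,b]$ with $0\le a\le b$, $$\mathbf{P}\Big[\sum_{i=1}^{d-1}U_i^q\in[a,b]\Big]\le b^{(d-1)/q}-a^{(d-1)/q}.$$ *)

(* Defs.v *)
From HB Require Import structures.
From mathcomp Require Import all_boot all_order all_algebra.
From mathcomp Require Import all_classical all_reals all_analysis.
Set Implicit Arguments. Unset Strict Implicit. Unset Printing Implicit Defensive.
Import Order.TTheory GRing.Theory Num.Theory.
Local Open Scope classical_set_scope.
Local Open Scope ring_scope.

Definition uniform01 (d : measure_display) (T : measurableType d)
  (R : realType) (P : probability T R) (X : {RV P >-> R}) : Prop :=
  forall A : set R, measurable A ->
    P (X @^-1` A) = uniform_prob (@ltr01 R) A.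

Definition mutually_independent (d : measure_display) (T : measurableType d)
  (R : realType) (P : probability T R) (n : nat) (X : 'I_n -> {RV P >-> R}) : Prop :=
  forall (J : {set 'I_n}) (A : 'I_n -> set R),
    (forall i, measurable (A i)) ->
    P (\bigcap_(i in [set j | j \in J]) (X i @^-1` A i)) =
    (\prod_(i in J) P (X i @^-1` A i))%E.

(* Main.v *)
Require Import Defs.
From HB Require Import structures.
From mathcomp Require Import all_boot all_order all_algebra.
From mathcomp Require Import all_classical all_reals all_analysis.
From mathcomp Require Import lra measurable_realfun.
Import Order.TTheory GRing.Theory Num.Theory.
Local Open Scope classical_set_scope.
Local Open Scope ring_scope.
Set Implicit Arguments. Unset Strict Implicit. Unset Printing Implicit Defensive.
Section Unif.
Variable R : realType.
Local Notation u := (uniform_prob (@ltr01 R)).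
Local Notation leb := (@lebesgue_measure R).

Lemma u_leb (A : set R) : measurable A -> u A = leb (A `&` `[0, 1]).
Proof.
move=> mA; rewrite /uniform_prob integral_uniform_pdf.
rewrite (eq_integral (fun=> 1%:E)); last first.
  move=> x; rewrite inE => -[_]; rewrite /= in_itv/= /uniform_pdf => ->.
  by rewrite subr0 invr1.
by rewrite integral_cst ?mul1e//; exact: measurableI.
Qed.

Lemma u_le (A B : set R) : measurable A -> measurable B ->
  A `&` `[0, 1] `<=` B -> (u A <= leb B)%E.
Proof.
move=> mA mB AB; rewrite u_leb//; apply: le_measure => //; rewrite inE//.
exact: measurableI.
Qed.

Lemma u_eq (A : set R) : measurable A -> A `<=` `[0, 1] -> u A = leb A.
Proof. by move=> mA A01; rewrite u_leb// setIidl. Qed.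

Lemma leb_co (x y : R) : x <= y -> leb `[x, y[ = (y - x)%:E.
Proof.
move=> xy; rewrite lebesgue_measure_itv/= lte_fin; case: ltgtP xy => //.
by move=> -> _; rewrite subrr.
Qed.

Lemma leb_cc (x y : R) : x <= y -> leb `[x, y] = (y - x)%:E.
Proof.
move=> xy; rewrite lebesgue_measure_itv/= lte_fin; case: ltgtP xy => //.
by move=> -> _; rewrite subrr.
Qed.
End Unif.

Section Fin.
Variables (d : measure_display) (T : measurableType d) (R : realType)
  (mu : {measure set T -> \bar R}).

Lemma subadd (I : Type) (s : seq I) (p : pred I) (E : I -> set T) :
  (forall i, measurable (E i)) ->
  (mu (\big[setU/set0]_(i <- s | p i) E i) <= \sum_(i <- s | p i) mu (E i))%E.
Proof.
move=> mE; elim: s => [|i s IH]; first by rewrite !big_nil measure0.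
rewrite !big_cons; case: (p i) => //.
apply: le_trans (measureU2 _ _ _) _ => //; first exact: bigsetU_measurable.
exact: leeD.
Qed.

Lemma addfin (I : choiceType) (s : seq I) (p : pred I) (E : I -> set T) :
  uniq s -> (forall i, measurable (E i)) ->
  (forall i j, i != j -> E i `&` E j = set0) ->
  mu (\big[setU/set0]_(i <- s | p i) E i) = (\sum_(i <- s | p i) mu (E i))%E.
Proof.
move=> + mE hE; elim: s => [|i s IH] /=; first by rewrite !big_nil measure0.
move=> /andP[nis us]; rewrite !big_cons; case: (p i); last exact: IH.
rewrite measureU //; first by rewrite -(IH us).
  exact: bigsetU_measurable.
rewrite -bigcup_seq_cond; apply/seteqP; split => // w [Ew] [j /= /andP[js _] Ejw].
have ij : i != j by apply/eqP => ij; move: nis; rewrite ij js.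
by have := hE i j ij; move/seteqP => [+ _] => /(_ w (conj Ew Ejw)).
Qed.
End Fin.

Section Main.
Variables (dsp : measure_display) (T : measurableType dsp) (R : realType)
  (P : probability T R) (n : nat) (U : 'I_n -> {RV P >-> R}).
Hypothesis hunif : forall i, uniform01 (U i).
Hypothesis hind : mutually_independent U.
Local Notation u := (uniform_prob (@ltr01 R)).
Local Notation leb := (@lebesgue_measure R).

Definition box (A : 'I_n -> set R) := [set w | forall i, A i (U i w)].

Lemma mU i : measurable_fun setT (U i).
Proof. exact: measurable_funPT. Qed.

Lemma mpre i (A : set R) : measurable A -> measurable (U i @^-1` A).
Proof. by move=> mA; rewrite -[_ @^-1` _]setTI; exact: mU. Qed.

Lemma box_prob A : (forall i, measurable (A i)) ->
  P (box A) = (\prod_(i < n) u (A i))%E.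
Proof.
move=> mA; have := hind [set: 'I_n]%SET mA.
have -> : \bigcap_(i in [set j | j \in [set: 'I_n]%SET]) (U i @^-1` A i) = box A.
  apply/seteqP; split => w /=.
    by move=> h i; apply: h; rewrite /= inE.
  by move=> h i _; exact: h.
move=> ->; under eq_bigl do rewrite inE.
apply: eq_bigr => i _; exact: hunif.
Qed.

Lemma mbox A : (forall i, measurable (A i)) -> measurable (box A).
Proof.
move=> mA; have -> : box A = \big[setI/setT]_(i <- index_enum 'I_n) (U i @^-1` A i).
  rewrite -bigcap_seq; apply/seteqP; split => w /=.
    by move=> h i _; exact: h.
  by move=> h i; apply: h; rewrite /= mem_index_enum.
by apply: bigsetI_measurable => i _; exact: mpre.
Qed.
End Main.

Section Part2.
Variables (dsp : measure_display) (T : measurableType dsp) (R : realType)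
  (P : probability T R) (n : nat) (U : 'I_n -> {RV P >-> R}).
Hypothesis hunif : forall i, uniform01 (U i).
Hypothesis hind : mutually_independent U.
Variable q : R.
Hypothesis hq : 1 <= q.
Local Notation u := (uniform_prob (@ltr01 R)).
Local Notation leb := (@lebesgue_measure R).

Let q0 : 0 < q. Proof. exact: lt_le_trans ltr01 hq. Qed.

Definition S (w : T) := \sum_(i < n) (U i w) `^ q.

Lemma mS : measurable_fun setT S.
Proof.
rewrite /S; apply: (@measurable_sum _ _ _ _ _ _ (fun i w => (U i w) `^ q)) => i.
exact: (measurableT_comp (measurable_powR q) (mU U i)).
Qed.

Lemma mSpre (B : set R) : measurable B -> measurable (S @^-1` B).
Proof. by move=> mB; rewrite -[_ @^-1` _]setTI; exact: mS. Qed.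

Lemma mSle b : measurable [set w | S w <= b].
Proof.
have -> : [set w | S w <= b] = S @^-1` `]-oo, b].
  by apply/seteqP; split => w; rewrite /= in_itv.
exact: mSpre.
Qed.

Lemma mSlt b : measurable [set w | S w < b].
Proof.
have -> : [set w | S w < b] = S @^-1` `]-oo, b[.
  by apply/seteqP; split => w; rewrite /= in_itv.
exact: mSpre.
Qed.

Lemma mSab a b : measurable [set w | a <= S w <= b].
Proof.
have -> : [set w | a <= S w <= b] = S @^-1` `[a, b].
  by apply/seteqP; split => w; rewrite /= in_itv.
exact: mSpre.
Qed.

Lemma term_le w i : (U i w) `^ q <= S w.
Proof.
rewrite /S (bigD1 i) //= lerDl; apply: sumr_ge0 => j _; exact: powR_ge0.
Qed.

Definition box01 := box U (fun=> `[0, 1[%classic).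

Lemma mbox01 : measurable box01.
Proof. by apply: mbox => i; exact: measurable_itv. Qed.

Lemma Pbox01 : P (~` box01) = 0%E.
Proof.
rewrite probability_setC; last exact: mbox01.
rewrite /box01 (box_prob hunif hind); last by move=> i; exact: measurable_itv.
rewrite (eq_bigr (fun=> 1%E)); last first.
  move=> i _; rewrite u_eq; last by move=> x /=; rewrite !in_itv/= => /andP[-> /ltW].
    by rewrite leb_co ?subr0.
  exact: measurable_itv.
by rewrite big1_eq subee.
Qed.

Lemma powRK x : 0 <= x -> (x `^ q) `^ q^-1 = x.
Proof. by move=> x0; rewrite -powRrM mulfV ?gt_eqF// powRr1. Qed.

Lemma pA b : 0 <= b -> (P [set w | (S w <= b)%R] <= (b `^ (n%:R / q))%:E)%E.
Proof.
move=> b0; case: (leP 1 b) => b1.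
  apply: le_trans (probability_le1 _ (mSle b)) _; rewrite lee_fin.
  rewrite -[X in X <= _](powRr0 b); apply: ler_powR => //.
  by apply: divr_ge0 => //; exact: ltW.
set c := b `^ q^-1.
have c0 : 0 <= c by exact: powR_ge0.
have c1 : c <= 1.
  rewrite /c; have -> : (1:R) = 1 `^ q^-1 by rewrite powR1.
  apply: ge0_ler_powR; rewrite ?nnegrE ?invr_ge0 //; exact: ltW.
have sub : [set w | S w <= b] `<=` box U (fun=> `[0, c]%classic) `|` ~` box01.
  move=> w /= Sw; have [h|h] := pselect (box01 w); last by right.
  left => i; have := h i; rewrite /= !in_itv/= => /andP[U0 _].
  rewrite U0 /= -(powRK U0) /c; apply: ge0_ler_powR => //.
  - by rewrite invr_ge0 ltW.
  - by rewrite nnegrE powR_ge0.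
  - exact: le_trans (term_le w i) Sw.
have m2 : measurable (box U (fun=> `[0, c]%classic) `|` ~` box01).
  apply: measurableU; last by apply: measurableC; exact: mbox01.
  by apply: mbox => i; exact: measurable_itv.
have H1 := le_measure P (mem_set (mSle b)) (mem_set m2) sub.
apply: le_trans H1 _.
apply: le_trans (measureU2 _ _ _) _.
- by apply: mbox => i; exact: measurable_itv.
- by apply: measurableC; exact: mbox01.
have h0 : (P (~` box01) <= 0)%E by rewrite Pbox01.
apply: le_trans (leeD (lexx _) h0) _.
rewrite adde0 /= (box_prob hunif hind); last by move=> i; exact: measurable_itv.
rewrite (eq_bigr (fun=> c%:E)); last first.
  move=> i _; rewrite u_eq; last by move=> x /=; rewrite !in_itv/= => /andP[-> /le_trans ->].
    by rewrite leb_cc ?subr0.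
  exact: measurable_itv.
rewrite prodEFin prodr_const card_ord lee_fin.
by rewrite -powR_mulrn // /c -powRrM mulrC.
Qed.
End Part2.


Lemma prod_le_pow (R : realType) (n : nat) (f : 'I_n -> \bar R) (c : R) :
  0 <= c -> (forall i, (0 <= f i)%E /\ (f i <= c%:E)%E) ->
  (\prod_(i < n) f i <= (c ^+ n)%:E)%E.
Proof.
move=> c0 hf.
have -> : (c ^+ n)%:E = (\prod_(i < n) c%:E)%E by rewrite prodEFin prodr_const card_ord.
suff : ((0 <= \prod_(i < n) f i) /\ (\prod_(i < n) f i <= \prod_(i < n) c%:E))%E by case.
elim/big_ind2 : _ => //.
- move=> x1 x2 y1 y2 [h1 h2] [h3 h4]; split; first exact: mule_ge0.
  exact: lee_pmul.

Qed.

Section Part3.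
Variables (dsp : measure_display) (T : measurableType dsp) (R : realType)
  (P : probability T R) (n : nat) (U : 'I_n -> {RV P >-> R}).
Hypothesis hunif : forall i, uniform01 (U i).
Hypothesis hind : mutually_independent U.
Variable q : R.
Hypothesis hq : 1 <= q.
Hypothesis hn : (0 < n)%N.
Variables (N : nat) (a b : R).
Hypotheses (hN : (0 < N)%N) (a0 : 0 < a) (ab : a <= b).
Local Notation u := (uniform_prob (@ltr01 R)).
Local Notation leb := (@lebesgue_measure R).
Local Notation S := (S U q).

Let q0 : 0 < q. Proof. exact: lt_le_trans ltr01 hq. Qed.
Let b0 : 0 < b. Proof. exact: lt_le_trans a0 ab. Qed.
Definition h : R := N%:R^-1.
Let h0 : 0 < h. Proof. by rewrite /h invr_gt0 ltr0n. Qed.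
Definition lam : R := (a / b) `^ q^-1.
Let lam0 : 0 < lam. Proof. by rewrite /lam powR_gt0 // divr_gt0. Qed.
Let lam1 : lam <= 1.
Proof.
have ab1 : a / b <= 1 by rewrite ler_pdivrMr // mul1r.
have ab0 : 0 <= a / b by rewrite divr_ge0 // ltW.
rewrite /lam; have -> : (1:R) = 1 `^ q^-1 by rewrite powR1.
by apply: ge0_ler_powR; rewrite ?nnegrE ?invr_ge0 ?ler01 ?(ltW q0).
Qed.

Definition M := [set k : {ffun 'I_n -> 'I_N} |
  \sum_(i < n) ((k i).+1%:R * h) `^ q <= b]%SET.

Definition bcell (k : {ffun 'I_n -> 'I_N}) :=
  box U (fun i => `[(k i).+1%:R * h, (k i).+2%:R * h[%classic).
Definition acell (k : {ffun 'I_n -> 'I_N}) :=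
  box U (fun i => `[lam * ((k i)%:R * h), lam * ((k i).+1%:R * h)[%classic).
Definition small :=
  \big[setU/set0]_(i <- index_enum 'I_n) (U i @^-1` `]-oo, h[%classic).

Lemma subB1 : [set w | S w <= b] `<=`
  ~` box01 U `|` small `|` \big[setU/set0]_(k <- index_enum _ | k \in M) bcell k.
Proof.
move=> w /= Sw; have [h01|] := pselect (box01 U w); last by move=> ?; left; left.
have [[i Ui]|hs] := pselect (exists i, U i w < h).
  left; right; rewrite /small -bigcup_seq; exists i; first exact: mem_index_enum.
  by rewrite /= in_itv /= Ui.
right.
have Uge i : h <= U i w by rewrite leNgt; apply/negP => H; apply: hs; exists i.
have U01 i : 0 <= U i w < 1 by have := h01 i; rewrite /= in_itv.
have N0 : 0 < (N%:R : R) by rewrite ltr0n.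
pose tr i := Num.truncn (U i w * N%:R).
have x0 i : 0 <= U i w * N%:R by rewrite mulr_ge0 // ?ler0n; case/andP: (U01 i).
have tr1 i : (1 <= tr i)%N.
  by rewrite truncn_gt0 -ler_pdivrMr // div1r; exact: Uge.
have trN i : (tr i < N)%N.
  rewrite truncn_lt_nat //; rewrite -[X in _ < X]mul1r ltr_pM2r //.
  by case/andP: (U01 i).
pose k := [ffun i => Ordinal (leq_ltn_trans (leq_pred (tr i)) (trN i))].
have kE i : (k i).+1 = tr i by rewrite ffunE /= prednK // tr1.
have kle i : (k i).+1%:R * h <= U i w.
  rewrite kE /h -/(_ / _) ler_pdivrMr //.
  by have /andP[] := truncn_itv (x0 i).
have klt i : U i w < (k i).+2%:R * h.
  rewrite kE /h -/(_ / _) ltr_pdivlMr //.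
  by have /andP[] := truncn_itv (x0 i).
rewrite -bigcup_seq_cond; exists k.
  rewrite /= mem_index_enum /= inE; apply: le_trans Sw.
  apply: ler_sum => i _; apply: ge0_ler_powR; rewrite ?nnegrE.
  - exact: ltW.
  - by rewrite mulr_ge0 // ltW.
  - by case/andP: (U01 i).
  - exact: kle.
move=> i /=; rewrite in_itv /=; apply/andP; split; [exact: kle|exact: klt].
Qed.

Let mitv (x y : R) : measurable (`[x, y[%classic : set R).
Proof. exact: measurable_itv. Qed.

Lemma mbcell k : measurable (bcell k).
Proof. by apply: mbox => i; exact: mitv. Qed.

Lemma macell k : measurable (acell k).
Proof. by apply: mbox => i; exact: mitv. Qed.

Lemma msmall : measurable small.
Proof. by apply: bigsetU_measurable => i _; apply: mpre; exact: measurable_itv. Qed.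

Lemma natr2 (k : nat) : (k.+2%:R : R) * h - k.+1%:R * h = h.
Proof. by rewrite -mulrBl -[k.+2%:R]natr1 addrAC subrr add0r mul1r. Qed.

Lemma B1 : (P [set w | (S w <= b)%R] <= (n%:R * h + #|M|%:R * h ^+ n)%:E)%E.
Proof.
have mbig : measurable (\big[setU/set0]_(k <- index_enum _ | k \in M) bcell k).
  by apply: bigsetU_measurable => k _; exact: mbcell.
have m1 : measurable (~` box01 U) by apply: measurableC; exact: mbox01.
have m3 : measurable (~` box01 U `|` small `|`
    \big[setU/set0]_(k <- index_enum _ | k \in M) bcell k).
  by apply: measurableU => //; apply: measurableU => //; exact: msmall.
have H1 := le_measure P (mem_set (mSle U q b)) (mem_set m3) subB1.
apply: le_trans H1 _.
apply: le_trans (measureU2 _ _ _) _ => //.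
  by apply: measurableU => //; exact: msmall.
apply: le_trans (leeD (measureU2 _ _ _) (lexx _)) _ => //; first exact: msmall.
have hP0 : (P (~` box01 U) <= 0)%E by rewrite (Pbox01 hunif hind).
have Hs : (P small <= (n%:R * h)%:E)%E.
  rewrite /small; apply: le_trans (subadd P _ _ _) _.
    by move=> i; apply: mpre; exact: measurable_itv.
  apply: (@le_trans _ _ (\sum_(i <- index_enum 'I_n) h%:E)%E).
    apply: lee_sum => i _; rewrite /= hunif; last exact: measurable_itv.
    apply: le_trans (u_le (B := `[0, h]%classic) _ _ _) _.
    - exact: measurable_itv.
    - exact: measurable_itv.
    - move=> x [] /=; rewrite !in_itv /= => /ltW -> /andP[-> _] //.
    - by rewrite leb_cc ?subr0 // ltW.
  by rewrite sumEFin sumr_const card_ord mulr_natl.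
have Hb : (P (\big[setU/set0]_(k <- index_enum _ | k \in M) bcell k)
    <= (#|M|%:R * h ^+ n)%:E)%E.
  apply: le_trans (subadd P _ _ _) _; first exact: mbcell.
  apply: (@le_trans _ _ (\sum_(k <- index_enum _ | k \in M) (h ^+ n)%:E)%E).
    apply: lee_sum => k _; rewrite /= /bcell (box_prob hunif hind); last by move=> i; exact: mitv.
    apply: prod_le_pow; first exact: ltW.
    move=> i; split; first exact: measure_ge0.
    apply: le_trans (u_le (B := `[(k i).+1%:R * h, (k i).+2%:R * h[%classic) _ _ _) _.
    - exact: mitv.
    - exact: mitv.
    - by move=> x [].
    have hle : (k i).+1%:R * h <= (k i).+2%:R * h.
      by rewrite ler_pM2r // ler_nat.
    by rewrite (leb_co hle) natr2.
  by rewrite sumEFin sumr_const mulr_natl.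
apply: le_trans (leeD (leeD hP0 Hs) Hb) _.
by rewrite add0e EFinD.
Qed.

Let laq : lam `^ q = a / b.
Proof.
by rewrite /lam -powRrM mulVf ?gt_eqF // powRr1 // divr_ge0 // ltW.
Qed.

Lemma acell_sub k : k \in M -> acell k `<=` [set w | S w < a].
Proof.
move=> kM w /= hw.
have hi i : lam * ((k i)%:R * h) <= U i w < lam * ((k i).+1%:R * h).
  by have := hw i; rewrite /= in_itv.
have lt i : (U i w) `^ q < a / b * ((k i).+1%:R * h) `^ q.
  have /andP[h1 h2] := hi i.
  have U0 : 0 <= U i w.
    by apply: le_trans h1; rewrite mulr_ge0 // ?mulr_ge0 // ltW.
  rewrite -laq -powRM; first last.
  - by rewrite mulr_ge0 // ltW.
  - exact: ltW.
  by apply: gt0_ltr_powR; rewrite ?nnegrE // ?mulr_ge0 // ?ltW.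
rewrite /S; apply: lt_le_trans (ltr_sum _ (fun i _ => lt i)) _.
  by apply/hasP; exists (Ordinal hn); rewrite ?mem_index_enum.
rewrite -mulr_sumr; move: kM; rewrite inE => kb.
apply: le_trans (ler_wpM2l _ kb) _; first by rewrite divr_ge0 // ltW.
by rewrite divfK // gt_eqF.
Qed.

Lemma acell_disj k k' : k != k' -> acell k `&` acell k' = set0.
Proof.
move=> kk'; have /existsP[i ki] : [exists i, k i != k' i].
  rewrite -negb_forall; apply: contra kk' => /forallP H.
  by apply/eqP/ffunP => i; exact/eqP/H.
apply/seteqP; split => // w [/(_ i) h1 /(_ i) h2].
have /andP[l1 r1] : lam * ((k i)%:R * h) <= U i w < lam * ((k i).+1%:R * h).
  by move: h1; rewrite /= in_itv.
have /andP[l2 r2] : lam * ((k' i)%:R * h) <= U i w < lam * ((k' i).+1%:R * h).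
  by move: h2; rewrite /= in_itv.
have c1 : ((k i : nat) < (k' i).+1)%N.
  by have := le_lt_trans l1 r2; rewrite ltr_pM2l // ltr_pM2r // ltr_nat.
have c2 : ((k' i : nat) < (k i).+1)%N.
  by have := le_lt_trans l2 r1; rewrite ltr_pM2l // ltr_pM2r // ltr_nat.
apply: (negP ki); apply/eqP; apply: val_inj.
by apply/anti_leq/andP; split; rewrite -ltnS.
Qed.

Lemma kh1 (j : 'I_N) : (j.+1%:R : R) * h <= 1.
Proof.
rewrite /h ler_pdivrMr ?ltr0n //.
have -> : (1 : R) * N%:R = N%:R by rewrite mul1r.
by rewrite ler_nat.
Qed.

Lemma B2 : ((#|M|%:R * (lam * h) ^+ n)%:E <= P [set w | (S w < a)%R])%E.
Proof.
have mbig : measurable (\big[setU/set0]_(k <- index_enum _ | k \in M) acell k).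
  by apply: bigsetU_measurable => k _; exact: macell.
have subU : \big[setU/set0]_(k <- index_enum _ | k \in M) acell k `<=`
    [set w | S w < a].
  rewrite -bigcup_seq_cond => w [k /= /andP[_ kM]]; exact: acell_sub.
have H := le_measure P (mem_set mbig) (mem_set (mSlt U q a)) subU.
apply: le_trans H; rewrite /=.
rewrite (addfin P _ (index_enum_uniq _) macell acell_disj).
rewrite (eq_bigr (fun=> ((lam * h) ^+ n)%:E)); last first.
  move=> k _; rewrite /acell /= (box_prob hunif hind); last by move=> i; exact: mitv.
  rewrite (eq_bigr (fun=> (lam * h)%:E)); last first.
    move=> i _; rewrite u_eq; first last.
    - move=> x /=; rewrite !in_itv /= => /andP[l r]; apply/andP; split.
        by apply: le_trans l; rewrite mulr_ge0 // ?mulr_ge0 // ltW.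
      apply: le_trans (ltW r) _; rewrite -[X in _ <= X]mul1r; apply: ler_pM => //.
      + exact: ltW.
      + by rewrite mulr_ge0 // ltW.
      + exact: kh1.
    - exact: mitv.
    rewrite leb_co; first by rewrite -mulrBr -mulrBl -natrB // subSnn mul1r.
    by rewrite ler_pM2l // ler_pM2r // ler_nat.
  by rewrite prodEFin prodr_const card_ord.
by rewrite sumEFin sumr_const mulr_natl.
Qed.
Lemma lam_bounds : 0 < lam /\ lam <= 1. Proof. by split. Qed.
End Part3.

Unset Implicit Arguments.

Theorem lemma5p4 (dsp : measure_display) (T : measurableType dsp)
  (R : realType) (P : probability T R) (d : nat) (hd : (2 <= d)%N)
  (U : 'I_d.-1 -> {RV P >-> R})
  (hunif : forall i, uniform01 (U i))
  (hind : mutually_independent U)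
  (q : R) (hq : 1 <= q) (a b : R) (ha : 0 <= a) (hab : a <= b) :
  (P [set w | (a <= \sum_(i < d.-1) (U i w) `^ q <= b)%R]
   <= ((b `^ (d.-1%:R / q) - a `^ (d.-1%:R / q))%R)%:E)%E.
Proof.
have hn : (0 < d.-1)%N by case: d hd U hunif hind => [|[|d']].
have q0 : 0 < q := lt_le_trans ltr01 hq.
set r := d.-1%:R / q.
have r0 : r != 0 by rewrite /r mulf_neq0 ?invr_eq0 ?pnatr_eq0 ?gt_eqF // -lt0n.
change (P [set w | (a <= S U q w <= b)%R] <= (b `^ r - a `^ r)%:E)%E.
have fP (X : set T) : measurable X -> P X = (fine (P X))%:E.
  move=> mX; rewrite fineK // ge0_fin_numE ?measure_ge0 //.
  exact: le_lt_trans (probability_le1 _ mX) (ltry _).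
have [a0|a0] : a = 0 \/ 0 < a by move: ha; rewrite le_eqVlt => /orP[/eqP<-|]; [left|right].
  subst a; rewrite powR0 // subr0.
  have sub : [set w | 0 <= S U q w <= b] `<=` [set w | S U q w <= b].
    by move=> w /= /andP[].
  apply: le_trans (le_measure P (mem_set (mSab U q 0 b)) (mem_set (mSle U q b)) sub) _.
  exact: (pA hunif hind hq hab).
have b0 : 0 < b := lt_le_trans a0 hab.
set pb := fine (P [set w | S U q w <= b]).
set pa := fine (P [set w | S U q w < a]).
set pab := fine (P [set w | a <= S U q w <= b]).
have Epb : P [set w | S U q w <= b] = pb%:E by exact: fP (mSle U q b).
have Epa : P [set w | S U q w < a] = pa%:E by exact: fP (mSlt U q a).
have Epab : P [set w | a <= S U q w <= b] = pab%:E by exact: fP (mSab U q a b).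
have add : pb = pa + pab.
  have E : [set w | S U q w <= b] =
      [set w | S U q w < a] `|` [set w | a <= S U q w <= b].
    apply/seteqP; split => w /=.
      move=> Sb; case: (ltP (S U q w) a) => h; [by left | by right; apply/andP; split].
    by case => [/ltW/le_trans/(_ hab) | /andP[]].
  have dis : [set w | S U q w < a] `&` [set w | a <= S U q w <= b] = set0.
    apply/seteqP; split => // w /= [h1 /andP[h2 _]].
    by move: h1; rewrite ltNge h2.
  have := measureU P (mSlt U q a) (mSab U q a b) dis.
  rewrite -E /= Epb Epa Epab -EFinD.
  by case.
have hpA : pb <= b `^ r.
  by have := pA hunif hind hq (ltW b0); rewrite Epb lee_fin.
have [lam0 lam1] := lam_bounds hq a0 hab.
set L := lam q a b ^+ d.-1.
have L0 : 0 <= L by rewrite /L exprn_ge0 // ltW.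
have L1 : L <= 1 by rewrite /L exprn_ile1 // ltW.
have LB : L * b `^ r = a `^ r.
  have -> : L = (a / b) `^ r.
    rewrite /L /lam -powR_mulrn ?powR_ge0 // -powRrM /r.
    by congr (_ `^ _); exact: mulrC.
  by rewrite -powRM ?divr_ge0 ?ltW // divfK // gt_eqF.
have hB (N : nat) : (0 < N)%N -> pab <= (b `^ r - a `^ r) + d.-1%:R * h R N.
  move=> hN.
  have := B1 hunif hind hq b hN; rewrite Epb lee_fin => h1.
  have := B2 hunif hind hq hn hN a0 hab; rewrite Epa lee_fin => h2.
  set X := #|M d.-1 q N b|%:R * h R N ^+ d.-1.
  rewrite -/X in h1.
  have {}h2 : L * X <= pa.
    by move: h2; rewrite exprMn mulrCA.
  have hh0 : 0 <= d.-1%:R * h R N by rewrite mulr_ge0 // /h invr_ge0 ler0n.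
  have e1 : L * pb <= L * (d.-1%:R * h R N + X) := ler_wpM2l L0 h1.
  have e2 : L * (d.-1%:R * h R N) <= d.-1%:R * h R N := ler_piMl hh0 L1.
  have e3 : (1 - L) * pb <= (1 - L) * b `^ r by apply: ler_wpM2l; rewrite ?subr_ge0.
  rewrite -LB.
  lra.
rewrite Epab lee_fin.
apply/ler_addgt0Pr => e e0.
pose N := (Num.truncn (d.-1%:R / e)).+1.
apply: le_trans (hB N _) _ => //.
rewrite lerD2l /h ler_pdivrMr ?ltr0n // mulrC.
have := truncnS_gt (d.-1%:R / e); rewrite ltr_pdivrMr // => H.
exact: ltW H.
Qed.
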